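(* The class of probe $P_5$-free graphs is a proper subclass of the class of $(C_7,C_9,C_{11},\ldots)$-free graphs; that is, every probe $P_5$-free graph contains no induced odd cycle of length at least $7$, and there exists a graph containing no induced odd cycle of length at least $7$ that is not probe $P_5$-free.
   Context: All graphs are finite and simple. $C_n$ is the cycle on $n$ vertices and $P_5$ the path on $5$ vertices. A graph is $H$-free if it has no induced subgraph isomorphic to $H$; $(C_7,C_9,C_{11},\ldots)$-free means $C_{2\ell+1}$-free for all $\ell\geq 3$. A graph $G=(V,E)$ is probe $P_5$-free if there is an independent set $N$ of $G$ and a set $F\subseteq\binom{N}{2}$ such that $(V,E\cup F)$ is $P_5$-free. *)

(* Defs.v *)
From mathcomp Require Import all_boot.
Set Implicit Arguments. Unset Strict Implicit. Unset Printing Implicit Defensive.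

Definition simple_graph (T : finType) (e : rel T) : Prop :=
  (forall x y, e x y = e y x) /\ (forall x, ~~ e x x).

Definition cycle_rel (n : nat) : rel 'I_n :=
  fun i j => (j == (i.+1 %% n) :> nat) || (i == (j.+1 %% n) :> nat).

Definition path_rel (n : nat) : rel 'I_n :=
  fun i j => (j == i.+1 :> nat) || (i == j.+1 :> nat).

Definition induced_sub (U T : finType) (h : rel U) (e : rel T) : Prop :=
  exists f : U -> T, injective f /\ forall u v, e (f u) (f v) = h u v.

Definition H_free (U T : finType) (h : rel U) (e : rel T) : Prop :=
  ~ induced_sub h e.

Definition P5_free (T : finType) (e : rel T) : Prop :=
  H_free (@path_rel 5) e.

Definition long_odd_cycle_free (T : finType) (e : rel T) : Prop :=
  forall l : nat, 3 <= l -> H_free (@cycle_rel (2 * l + 1)) e.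

(* Probe P5-free: there is an independent set N and a set F of pairs of
   vertices of N such that (V, E u F) is P5-free. F is represented as a
   symmetric irreflexive relation contained in N x N. *)
Definition probe_P5_free (T : finType) (e : rel T) : Prop :=
  exists (N : {set T}) (F : rel T),
    (forall x y, x \in N -> y \in N -> ~~ e x y) /\
    (forall x y, F x y -> (x \in N) && (y \in N)) /\
    (forall x y, F x y = F y x) /\ (forall x, ~~ F x x) /\
    P5_free (fun x y => e x y || F x y).

(* Main.v *)
Require Import Defs.
From mathcomp Require Import all_boot.
From mathcomp Require Import zify.
From Stdlib Require Import Classical.
Set Implicit Arguments. Unset Strict Implicit. Unset Printing Implicit Defensive.
Lemma part1 (T : finType) (e : rel T) : simple_graph e -> probe_P5_free e -> long_odd_cycle_free e.
Proof.
move=> [esym eirr] [N [F [Nind [FN [Fsym [Firr P5f]]]]]] l l3 [f [finj fe]].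
have kpos : 0 < 2 * l + 1 by rewrite addn1.
have k7 : 7 <= 2 * l + 1 by lia.
pose v (i : nat) : T := f (Ordinal (ltn_pmod i kpos)).
have vE : forall i j, e (v i) (v j) = (j == i.+1 %[mod 2 * l + 1]) || (i == j.+1 %[mod 2 * l + 1]).
  have mS : forall m, (m %% (2 * l + 1)).+1 %% (2 * l + 1) = m.+1 %% (2 * l + 1).
    by move=> m; rewrite -[(m %% _).+1]addn1 modnDml [m + 1]addn1.
  by move=> i j; rewrite fe /cycle_rel /= !mS.
have vinj : forall i j, v i = v j -> i = j %[mod 2 * l + 1].
  by move=> i j /finj /(congr1 val).
have vmod : forall i j, i = j %[mod 2 * l + 1] -> v i = v j.
  by move=> i j h; rewrite /v; congr (f _); apply: val_inj => /=.
have Fl : forall x y, F x y -> x \in N by move=> x y /FN /andP[].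
have Fr : forall x y, F x y -> y \in N by move=> x y /FN /andP[].
have vadj : forall i, ~~ ((v i \in N) && (v i.+1 \in N)).
  by move=> i; apply/negP => /andP[a b]; have := Nind _ _ a b; rewrite vE eqxx.
have [i /andP[Ni Ni1]] : exists i, (v i \notin N) && (v i.+1 \notin N).
  apply: NNPP => H.
  have alt : forall i, (v i.+1 \in N) = ~~ (v i \in N).
    move=> i; have := vadj i.
    case a: (v i \in N); case b: (v i.+1 \in N) => //= _.
    by exfalso; apply: H; exists i; rewrite a b.
  have altk : forall n, (v n \in N) = (v 0 \in N) (+) odd n.
    elim=> [|n IH]; first by rewrite addbF.
    by rewrite alt IH /= addbN.
  have := altk (2 * l + 1); rewrite (vmod (2 * l + 1) 0); last by rewrite modnn mod0n.
  have ok : odd (2 * l + 1) by rewrite oddD oddM.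
  by rewrite ok addbT; case: (v 0 \in N).
pose d := i + (2 * l + 1) - 4.
have vd4 : v (d + 4) = v i.
  apply: vmod; have -> : d + 4 = i + (2 * l + 1) by rewrite /d; lia.
  by rewrite modnDr.
have vd5 : v (d + 5) = v i.+1.
  apply: vmod; have -> : d + 5 = i.+1 + (2 * l + 1) by rewrite /d; lia.
  by rewrite modnDr.
have N4 : v (d + 4) \notin N by rewrite vd4.
have N5 : v (d + 5) \notin N by rewrite vd5.
have eadj : forall s t, s <= 5 -> t <= 5 -> e (v (d + s)) (v (d + t)) = (t == s.+1) || (s == t.+1).
  move=> s t hs ht; rewrite vE -!addnS !eqn_modDl !modn_small //; lia.
have vinj2 : forall s t, s <= 5 -> t <= 5 -> v (d + s) = v (d + t) -> s = t.
  move=> s t hs ht /vinj /eqP; rewrite eqn_modDl !modn_small; [by move/eqP | lia | lia].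
have Fno : forall x, x \notin N -> forall y, F x y = false.
  by move=> x hx y; apply/negbTE/negP => /Fl; apply/negP.
have Fno' : forall y, y \notin N -> forall x, F x y = false.
  by move=> y hy x; apply/negbTE/negP => /Fr; apply/negP.
have Fa : forall s, F (v (d + s)) (v (d + s.+1)) = false.
  move=> s; apply/negbTE/negP => h; have := vadj (d + s).
  by rewrite -addnS (Fl _ _ h) (Fr _ _ h).
have Fa' : forall s, F (v (d + s.+1)) (v (d + s)) = false by move=> s; rewrite Fsym Fa.
have Fi : forall x, F x x = false := fun x => negbTE (Firr x).
apply: P5f.
case Fc: (F (v (d + 1)) (v (d + 3))).
- have N1 : v (d + 1) \in N := Fl _ _ Fc.
  have N0 : v (d + 0) \notin N.
    by apply/negP => h0; have := vadj (d + 0); rewrite -addnS h0 N1.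
  have Fc' : F (v (d + 3)) (v (d + 1)) = true by rewrite Fsym.
  exists (fun u : 'I_5 => v (d + nth 0 [:: 5; 4; 3; 1; 0] u)); split.
  + move=> u w /vinj2 h; apply: val_inj.
    by move: u w h => [[|[|[|[|[|//]]]]] ?] [[|[|[|[|[|//]]]]] ?] /= /(_ isT isT) /eqP.
  + case=> [[|[|[|[|[|//]]]]] ?] [[|[|[|[|[|//]]]]] ?];
    rewrite /= eadj //= ?Fi ?Fc ?Fc' ?Fa ?Fa' ?(Fno _ N4) ?(Fno' _ N4) ?(Fno _ N5) ?(Fno' _ N5)
       ?(Fno _ N0) ?(Fno' _ N0) //.
- have Fc' : F (v (d + 3)) (v (d + 1)) = false by rewrite Fsym.
  exists (fun u : 'I_5 => v (d + nth 0 [:: 1; 2; 3; 4; 5] u)); split.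
  + move=> u w /vinj2 h; apply: val_inj.
    by move: u w h => [[|[|[|[|[|//]]]]] ?] [[|[|[|[|[|//]]]]] ?] /= /(_ isT isT) /eqP.
  + case=> [[|[|[|[|[|//]]]]] ?] [[|[|[|[|[|//]]]]] ?];
    rewrite /= eadj //= ?Fi ?Fc ?Fc' ?Fa ?Fa' ?(Fno _ N4) ?(Fno' _ N4) ?(Fno _ N5) ?(Fno' _ N5) //.
Qed.

Definition edges7 : seq (nat * nat) :=
  [:: (0,1);(1,2);(2,3);(3,4);(4,5);(5,0);(6,0);(6,1)].
Definition gen (a b : nat) : bool :=
  has (fun p => ((p.1 == a) && (p.2 == b)) || ((p.1 == b) && (p.2 == a))) edges7.
Definition pathn (i j : nat) : bool := (j == i.+1) || (i == j.+1).
Definition isP5n (g : nat -> nat -> bool) (p : seq nat) : bool :=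
  [&& size p == 5, all (fun a => a < 7) p, uniq p &
   all (fun i => all (fun j => g (nth 0 p i) (nth 0 p j) == pathn i j) (iota 0 5)) (iota 0 5)].
Definition goodn (bs : seq bool) (p : seq nat) : bool :=
  all (fun i => all (fun j => (i != j) ==> ~~ (nth false bs (nth 0 p i) && nth false bs (nth 0 p j))) (iota 0 5)) (iota 0 5).
Definition Plist : seq (seq nat) :=
  [:: [:: 0;1;2;3;4]; [:: 0;5;4;3;2]; [:: 1;0;5;4;3]; [:: 1;2;3;4;5];
      [:: 2;1;0;5;4]; [:: 3;2;1;0;5]; [:: 3;4;5;0;6]; [:: 4;3;2;1;6]].
Fixpoint allbits (n : nat) : seq (seq bool) :=
  if n is n'.+1 then [seq b :: s | b <- [:: false; true], s <- allbits n'] else [:: [::]].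
Definition indepn (bs : seq bool) :=
  all (fun a => all (fun b => ~~ (nth false bs a && nth false bs b && gen a b)) (iota 0 7)) (iota 0 7).
Definition S1b := [:: true; false; true; false; true; false; false].
Definition S2b := [:: false; true; false; true; false; true; false].
Lemma chk : all (fun bs => indepn bs ==> (bs != S1b) ==> (bs != S2b) ==>
   has (fun p => isP5n gen p && goodn bs p) Plist) (allbits 7).
Proof. vm_compute. reflexivity. Qed.
Definition sp (a b : nat) (x y : nat) := ((x == a) && (y == b)) || ((x == b) && (y == a)).
Definition Fc (a1 a2 a3 : nat) (b1 b2 b3 : bool) (x y : nat) : bool :=
  if sp a1 a2 x y then b1 else if sp a2 a3 x y then b2 else if sp a1 a3 x y then b3 else false.
Definition Wl : seq (seq nat) :=
  [:: [:: 2;3;5;0;6]; [:: 5;4;2;1;6]; [:: 3;2;1;0;5]; [:: 2;1;0;5;4];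
      [:: 0;5;4;3;2]; [:: 1;0;5;4;3]; [:: 0;1;2;3;4]; [:: 1;2;3;4;5]].
Definition exP5 (g : nat -> nat -> bool) := has (isP5n g) Wl.
Lemma chk2 : forall b1 b2 b3, exP5 (fun x y => gen x y || Fc 0 2 4 b1 b2 b3 x y) && exP5 (fun x y => gen x y || Fc 1 3 5 b1 b2 b3 x y).
Proof. by move=> [] [] []; vm_compute. Qed.

Definition ge (x y : 'I_7) : bool := gen x y.

Lemma isP5n_sub (g : rel 'I_7) p :
  isP5n (fun a b => g (inord a) (inord b)) p -> induced_sub (@path_rel 5) g.
Proof.
case/and4P => /eqP sz ha up /allP hall.
exists (fun u : 'I_5 => inord (nth 0 p u) : 'I_7); split.
- move=> u w /(congr1 val).
  have vE : forall u : 'I_5, val (inord (nth 0 p u) : 'I_7) = nth 0 p u.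
    by move=> v; apply: inordK; move/allP: ha; apply; apply: mem_nth; rewrite sz.
  rewrite !vE => /eqP; rewrite nth_uniq ?sz // => /eqP h; exact: val_inj.
- move=> u w; have h1 := hall u; rewrite mem_iota add0n ltn_ord in h1.
  move/allP: (h1 isT) => h2; have h3 := h2 w; rewrite mem_iota add0n ltn_ord in h3.
  exact/eqP/(h3 isT).
Qed.

Lemma isP5n_ext (g1 g2 : nat -> nat -> bool) p :
  isP5n g2 p ->
  (forall i j, i < 5 -> j < 5 -> g1 (nth 0 p i) (nth 0 p j) = g2 (nth 0 p i) (nth 0 p j)) ->
  isP5n g1 p.
Proof.
case/and4P => sz ha up hall H; rewrite /isP5n sz ha up !andTb.
apply/allP => i; rewrite mem_iota => /andP[_ hi]; apply/allP => j; rewrite mem_iota => /andP[_ hj].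
move/allP: hall => /(_ i); rewrite mem_iota hi => /(_ isT) /allP /(_ j).
by rewrite mem_iota hj H // => /(_ isT).
Qed.

Lemma allbitsP n s : size s = n -> s \in allbits n.
Proof.
elim: n s => [|n IH] [|b s] // [hs].
change (b :: s \in [seq b :: s | b <- [:: false; true], s <- allbits n]).
by apply: allpairs_f; [case: b | exact: IH].
Qed.

Definition oI (i : nat) (h : i < 7) : 'I_7 := Ordinal h.

Definition cyc7 (i j : nat) := (j == i.+1 %% 7) || (i == j.+1 %% 7).
Lemma C7_tri0 : all (fun a => all (fun b => all (fun c =>
   ~~ [&& cyc7 a b, cyc7 b c & cyc7 a c]) (iota 0 7)) (iota 0 7)) (iota 0 7).
Proof. by vm_compute. Qed.
Lemma C7_tri (a b c : 'I_(2*3+1)) : ~~ [&& cycle_rel a b, cycle_rel b c & cycle_rel a c].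
Proof.
have m : forall x : 'I_(2*3+1), val x \in iota 0 7 by move=> x; rewrite mem_iota ltn_ord.
exact: (allP (allP (allP C7_tri0 _ (m a)) _ (m b)) _ (m c)).
Qed.

Lemma lt7_of (g : nat -> nat -> bool) p i : isP5n g p -> i < 5 -> nth 0 p i < 7.
Proof.
case/and4P => /eqP sz ha _ _ hi; move/allP: ha; apply; apply: mem_nth; by rewrite sz.
Qed.

Lemma special (F : rel 'I_7) bsS a1 a2 a3 :
  (bsS, a1, a2, a3) = (S1b, 0, 2, 4) \/ (bsS, a1, a2, a3) = (S2b, 1, 3, 5) ->
  (forall x y, F x y = F y x) -> (forall x, ~~ F x x) ->
  (forall a b, a < 7 -> b < 7 -> F (inord a) (inord b) =
      [&& nth false bsS a, nth false bsS b & F (inord a) (inord b)]) ->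
  induced_sub (@path_rel 5) (fun x y => ge x y || F x y).
Proof.
move=> sel Fsym Firr hF.
have FcE : forall a b, a < 7 -> b < 7 -> F (inord a) (inord b) =
   Fc a1 a2 a3 (F (inord a1) (inord a2)) (F (inord a2) (inord a3)) (F (inord a1) (inord a3)) a b.
  move=> a b ha hb; rewrite hF //.
  case: sel => [[-> -> -> ->]|[-> -> -> ->]];
  move: a b ha hb => [|[|[|[|[|[|[|a]]]]]]] [|[|[|[|[|[|[|b]]]]]]] //= _ _;
  by rewrite ?(negbTE (Firr _)) // Fsym.
have hex : exP5 (fun x y => gen x y || Fc a1 a2 a3 (F (inord a1) (inord a2))
      (F (inord a2) (inord a3)) (F (inord a1) (inord a3)) x y).
  have := chk2 (F (inord a1) (inord a2)) (F (inord a2) (inord a3)) (F (inord a1) (inord a3)).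
  by case: sel => [[_ -> -> ->]|[_ -> -> ->]] /andP[].
case/hasP: hex => p _ hp.
apply: isP5n_sub; apply: (isP5n_ext hp) => i j hi hj.
by rewrite /ge !inordK ?(lt7_of hp) // FcE ?(lt7_of hp).
Qed.

Lemma part2 : exists (T : finType) (e : rel T),
     simple_graph e /\ long_odd_cycle_free e /\ ~ probe_P5_free e.
Proof.
exists 'I_7, ge; split; [|split].
- split.
    by move=> x y; rewrite /ge /gen; apply: eq_has => p /=; rewrite orbC.
  by case=> [[|[|[|[|[|[|[|//]]]]]]] ?].
- move=> l l3 [f [finj fe]].
  have := leq_card f finj; rewrite !card_ord => hle.
  have e3 : l = 3 by lia.
  subst l.
  have [g fg gf] := injF_bij finj.
  have h01 : cycle_rel (g (oI (isT : 0 < 7))) (g (oI (isT : 1 < 7))) by rewrite -fe !gf.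
  have h16 : cycle_rel (g (oI (isT : 1 < 7))) (g (oI (isT : 6 < 7))) by rewrite -fe !gf.
  have h06 : cycle_rel (g (oI (isT : 0 < 7))) (g (oI (isT : 6 < 7))) by rewrite -fe !gf.
  by have := C7_tri (g (oI (isT : 0 < 7))) (g (oI (isT : 1 < 7))) (g (oI (isT : 6 < 7))); rewrite h01 h16 h06.
- move=> [N [F [Nind [FN [Fsym [Firr P5f]]]]]]; apply: P5f.
  pose bs := [seq (inord i : 'I_7) \in N | i <- iota 0 7].
  have bsE : forall a, a < 7 -> nth false bs a = (inord a \in N).
    by move=> a ha; rewrite /bs (nth_map 0) ?size_iota // nth_iota.
  have FNb : forall a b, a < 7 -> b < 7 -> F (inord a) (inord b) =
      [&& nth false bs a, nth false bs b & F (inord a) (inord b)].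
    move=> a b ha hb; rewrite !bsE //; case h: (F (inord a) (inord b)); last by rewrite !andbF.
    by rewrite andbT (FN _ _ h).
  have ind : indepn bs.
    apply/allP => a; rewrite mem_iota add0n => /andP[_ ha].
    apply/allP => b; rewrite mem_iota add0n => /andP[_ hb].
    rewrite !bsE //; apply/negP => /andP[/andP[na nb] gab].
    by have := Nind _ _ na nb; rewrite /ge !inordK ?gab.
  have := allP chk bs (allbitsP (_ : size bs = 7)); rewrite size_map size_iota => /(_ erefl).
  rewrite ind implyTb.
  case: (eqVneq bs S1b) => [h1 _|n1].
    by apply: (@special F bs 0 2 4) => //; left; rewrite h1.
  rewrite implyTb.
  case: (eqVneq bs S2b) => [h2 _|n2].
    by apply: (@special F bs 1 3 5) => //; right; rewrite h2.
  rewrite implyTb => /hasP [p _ /andP[hp hg]].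
  apply: isP5n_sub; apply: (isP5n_ext hp) => i j hi hj.
  rewrite /ge !inordK ?(lt7_of hp) // FNb ?(lt7_of hp) //.
  case: (eqVneq i j) => [<-|nij]; first by rewrite (negbTE (Firr _)) !andbF orbF.
  have := allP (allP hg i _) j _; rewrite !mem_iota add0n hi hj nij implyTb => /(_ isT isT).
  by move/negbTE => h; rewrite andbA h andFb orbF.
Qed.

Theorem mainTheorem10 :
  (forall (T : finType) (e : rel T), simple_graph e ->
     probe_P5_free e -> long_odd_cycle_free e) /\
  (exists (T : finType) (e : rel T),
     simple_graph e /\ long_odd_cycle_free e /\ ~ probe_P5_free e).
Proof.
split; [exact: part1 | exact: part2].
Qed.
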